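(* Let $n\ge4$, $0<\alpha_2,\alpha_3<1$, $\alpha_1=1-\alpha_2-\alpha_3$, $\lambda^*=\big(\frac{n-1+\alpha_1}{n},\frac{\alpha_2}{n},\frac{\alpha_3}{n}\big)$. Then $$\sum_{i_2=0}^{n}|l_{(n-i_2,i_2,0)}(\lambda^* )|\le\frac{2^{n+1}}{e\,n(\ln n-\ln2)}\Big(1+\frac{15}{n-3}\Big)\Big(1+\frac{e(\ln n-1)\,n(n+1)}{2^{n+1}}\Big),$$ $$\sum_{i_3=1}^{n}|l_{(n-i_3,0,i_3)}(\lambda^* )|\le\frac{2^{n+1}}{e\,n(\ln n-\ln2)}\Big(1+\frac{15}{n-3}\Big)\Big(1+\frac{e(\ln n-1)\,n^2}{2^{n+1}}\Big).$$
   Context: For an integer $n\ge1$ and $i=(i_1,i_2,i_3)\in\mathbb{Z}_+^3$ with $i_1+i_2+i_3=n$, $l_i(\lambda)=\prod_{s=1}^{3}\frac{1}{i_s!}\prod_{t=0}^{i_s-1}(n\lambda_s-t)$ for $\lambda=(\lambda_1,\lambda_2,\lambda_3)$ (Lagrange fundamental polynomials for the equally spaced nodes $i/n$ of a triangle in barycentric coordinates). *)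

(* Defs.v *)
From Stdlib Require Import Reals Factorial.
Open Scope R_scope.

Fixpoint falling (x : R) (k : nat) : R :=
  match k with
  | O => 1
  | S k' => falling x k' * (x - INR k')
  end.

Definition lag_factor (n i : nat) (lam : R) : R :=
  / INR (fact i) * falling (INR n * lam) i.

Definition lagr (n i1 i2 i3 : nat) (l1 l2 l3 : R) : R :=
  lag_factor n i1 l1 * lag_factor n i2 l2 * lag_factor n i3 l3.

(* Main.v *)
Require Import Defs.
From Stdlib Require Import Reals Lra Lia Factorial.
Open Scope R_scope.

Fixpoint H (k : nat) : R :=
  match k with O => 0 | S k' => H k' + / INR (S k') end.

Lemma falling_S_l x k : falling x (S k) = x * falling (x - 1) k.
Proof.
  revert x; induction k as [|k IH]; intro x; simpl.
  - ring.
  - simpl in IH. rewrite IH. destruct k; simpl; ring.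
Qed.

Lemma fall_nonneg x m : (forall t, (t < m)%nat -> 0 <= x - INR t) -> 0 <= falling x m.
Proof.
  induction m as [|m IH]; intro Hf; simpl; [lra|].
  apply Rmult_le_pos; [apply IH; intros; apply Hf; lia| apply Hf; lia].
Qed.

Lemma fall_abs_le x y m :
  (forall t, (t < m)%nat -> Rabs (x - INR t) <= y - INR t) ->
  Rabs (falling x m) <= falling y m.
Proof.
  induction m as [|m IH]; intro Hf; simpl.
  - rewrite Rabs_R1; lra.
  - rewrite Rabs_mult. apply Rmult_le_compat; try apply Rabs_pos.
    + apply IH; intros; apply Hf; lia.
    + apply Hf; lia.
Qed.

Lemma key_scalar s a : 0 < s -> s - a <= s * exp (- (a / s)).
Proof.
  intro Hs. pose proof (exp_ineq1_le (- (a/s))).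
  replace (s - a) with (s * (1 + - (a / s))) by (field; lra).
  apply Rmult_le_compat_l; lra.
Qed.

Lemma fall_fact n m : (m <= n)%nat ->
  INR (fact n) = falling (INR n) m * INR (fact (n - m)).
Proof.
  induction m as [|m IH]; intro Hm.
  - simpl. rewrite Nat.sub_0_r. ring.
  - simpl falling. rewrite IH by lia.
    replace (n - m)%nat with (S (n - S m)) by lia.
    rewrite fact_simpl, mult_INR. rewrite S_INR, minus_INR, S_INR by lia. ring.
Qed.

Lemma upper_bound n a : 0 < a < 1 -> forall m, (m <= n)%nat ->
  0 <= falling (INR n - a) m <= falling (INR n) m * exp (- a * (H n - H (n - m))).
Proof.
  intros Ha m; induction m as [|m IH]; intro Hm.
  - rewrite Nat.sub_0_r. simpl. replace (- a * (H n - H n)) with 0 by ring.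
    rewrite exp_0. lra.
  - destruct (IH ltac:(lia)) as [I1 I2].
    assert (Hnm : INR n - INR m >= 1).
    { assert (INR (S m) <= INR n) by (apply le_INR; lia). rewrite S_INR in H0. lra. }
    simpl falling. split.
    + apply Rmult_le_pos; lra.
    + replace (n - m)%nat with (S (n - S m)) in I2 by lia.
      cbn [H] in I2.
      replace (INR (S (n - S m))) with (INR n - INR m) in I2
        by (rewrite S_INR, minus_INR by lia; rewrite S_INR; ring).
      replace (- a * (H n - H (n - S m))) with
        (- a * (H n - (H (n - S m) + / (INR n - INR m))) + - (a / (INR n - INR m)))
        by (field; lra).
      rewrite exp_plus.
      replace (INR n - a - INR m) with ((INR n - INR m) - a) by ring.
      pose proof (key_scalar (INR n - INR m) a ltac:(lra)).
      replace (falling (INR n) m * (INR n - INR m) *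
        (exp (- a * (H n - (H (n - S m) + / (INR n - INR m)))) * exp (- (a / (INR n - INR m)))))
       with ((falling (INR n) m * exp (- a * (H n - (H (n - S m) + / (INR n - INR m))))) *
             ((INR n - INR m) * exp (- (a / (INR n - INR m))))) by ring.
      apply Rmult_le_compat; lra.
Qed.

Lemma lower_bound a : 0 < a < 1 -> forall k,
  Rabs (falling (a - 1) k) <= INR (fact k) * exp (- a * H k).
Proof.
  intros Ha k; induction k as [|k IH].
  - simpl. rewrite Rabs_R1. replace (-a*0) with 0 by ring. rewrite exp_0; lra.
  - simpl falling. rewrite Rabs_mult.
    rewrite fact_simpl, mult_INR. cbn [H].
    assert (HS : INR (S k) >= 1) by (rewrite S_INR; pose proof (pos_INR k); lra).
    replace (Rabs (a - 1 - INR k)) with (INR (S k) - a)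
      by (rewrite Rabs_left1, S_INR; [ring| pose proof (pos_INR k); lra]).
    replace (- a * (H k + / INR (S k))) with (- a * H k + - (a / INR (S k))) by (field; lra).
    rewrite exp_plus.
    pose proof (key_scalar (INR (S k)) a ltac:(lra)).
    replace (INR (S k) * INR (fact k) * (exp (- a * H k) * exp (- (a / INR (S k)))))
      with ((INR (fact k) * exp (- a * H k)) * (INR (S k) * exp (- (a / INR (S k))))) by ring.
    apply Rmult_le_compat; try apply Rabs_pos; lra.
Qed.

Lemma term_bound n k a b : (S k <= n)%nat -> 0 < a < 1 -> 0 < b < 1 ->
  Rabs (/ INR (fact (n - S k)) * falling (INR n - a - b) (n - S k)) *
  Rabs (/ INR (fact (S k)) * falling a (S k))
  <= C n (S k) / INR (S k) * (a * exp (- a * (H n - / INR (S k)))).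
Proof.
  intros Hk Ha Hb.
  assert (A1 : Rabs (falling (INR n - a - b) (n - S k)) <= falling (INR n - a) (n - S k)).
  { apply fall_abs_le. intros t Ht.
    assert (INR t + 2 <= INR n).
    { replace 2 with (INR 2) by (simpl; ring). rewrite <- plus_INR. apply le_INR. lia. }
    rewrite Rabs_right; lra. }
  destruct (upper_bound n a Ha (n - S k) ltac:(lia)) as [A2 A3].
  replace (n - (n - S k))%nat with (S k) in A3 by lia.
  pose proof (lower_bound a Ha k) as A4.
  pose proof (fall_fact n (n - S k) ltac:(lia)) as A5.
  replace (n - (n - S k))%nat with (S k) in A5 by lia.
  rewrite falling_S_l.
  rewrite !Rabs_mult, !Rabs_inv.
  rewrite (Rabs_right a) by lra.
  rewrite !(Rabs_right (INR (fact _))) by (apply Rle_ge, pos_INR).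
  set (F := falling (INR n) (n - S k)) in *.
  set (E1 := exp (- a * (H n - H (S k)))) in *.
  set (E2 := exp (- a * H k)) in *.
  assert (HE : exp (- a * (H n - / INR (S k))) = E1 * E2).
  { unfold E1, E2. rewrite <- exp_plus. f_equal. cbn [H]. ring. }
  rewrite HE.
  assert (Pf := INR_fact_lt_0 (n - S k)).
  assert (Pk := INR_fact_lt_0 k).
  assert (PS : 0 < INR (S k)) by (apply lt_0_INR; lia).
  assert (E1p : 0 < E1) by apply exp_pos.
  apply Rle_trans with (/ INR (fact (n - S k)) * (F * E1) * (/ INR (fact (S k)) * (a * (INR (fact k) * E2)))).
  - apply Rmult_le_compat.
    + apply Rmult_le_pos; [left; apply Rinv_0_lt_compat; lra| apply Rabs_pos].
    + apply Rmult_le_pos; [left; apply Rinv_0_lt_compat, INR_fact_lt_0| apply Rmult_le_pos; [lra|apply Rabs_pos]].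
    + apply Rmult_le_compat_l; [left; apply Rinv_0_lt_compat; lra|lra].
    + apply Rmult_le_compat_l; [left; apply Rinv_0_lt_compat, INR_fact_lt_0|].
      apply Rmult_le_compat_l; lra.
  - right. unfold C. rewrite A5. rewrite fact_simpl, mult_INR.
    field. repeat split; lra.
Qed.

Lemma E_gen a y : 0 < y -> a * exp (- a * y) <= / (exp 1 * y).
Proof.
  intro Hy. pose proof (exp_ineq1_le (a * y - 1)) as E.
  replace (a * y - 1) with (a * y + - 1) in E by ring.
  rewrite exp_plus in E.
  assert (Pe : 0 < exp (a * y)) by apply exp_pos.
  assert (Pe1 : 0 < exp 1) by apply exp_pos.
  assert (exp (-1) = / exp 1) by (rewrite <- exp_Ropp; reflexivity).
  rewrite H0 in E.
  replace (- a * y) with (- (a * y)) by ring. rewrite exp_Ropp.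
  apply Rmult_le_reg_r with (exp 1 * y * exp (a * y)).
  { apply Rmult_lt_0_compat; [apply Rmult_lt_0_compat|]; lra. }
  replace (a * / exp (a * y) * (exp 1 * y * exp (a * y))) with (a * y * exp 1) by (field; lra).
  replace (/ (exp 1 * y) * (exp 1 * y * exp (a * y))) with (exp (a * y)) by (field; lra).
  apply Rmult_le_reg_r with (/ exp 1). { apply Rinv_0_lt_compat; lra. }
  replace (a * y * exp 1 * / exp 1) with (a * y) by (field; lra). lra.
Qed.

Lemma ln_le_xm1 x : 0 < x -> ln x <= x - 1.
Proof. intro. pose proof (exp_ineq1_le (ln x)). rewrite exp_ln in H1 by lra. lra. Qed.

Lemma H_ln k : ln (INR k + 1) <= H k.
Proof.
  induction k as [|k IH].
  - simpl. replace (0 + 1) with 1 by ring. rewrite ln_1. lra.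
  - cbn [H]. rewrite S_INR.
    assert (P : 0 < INR k + 1) by (pose proof (pos_INR k); lra).
    assert (ln (INR k + 1 + 1) - ln (INR k + 1) <= / (INR k + 1)).
    { assert (ln ((INR k + 1 + 1) / (INR k + 1)) = ln (INR k + 1 + 1) - ln (INR k + 1)) as <-.
      { unfold Rdiv. rewrite ln_mult, ln_Rinv; try lra. apply Rinv_0_lt_compat; lra. }
      pose proof (ln_le_xm1 ((INR k + 1 + 1) / (INR k + 1))).
      replace ((INR k + 1 + 1) / (INR k + 1) - 1) with (/ (INR k + 1)) in H0 by (field; lra).
      apply H0. apply Rdiv_lt_0_compat; lra. }
    lra.
Qed.

Lemma ln2_half : / 2 < ln 2.
Proof.
  assert (exp (/2) * exp (/2) = exp 1) by (rewrite <- exp_plus; f_equal; field).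
  pose proof exp_le_3. assert (0 < exp (/2)) by apply exp_pos.
  assert (exp (/2) < 2) by nra.
  rewrite <- (ln_exp (/2)). apply ln_increasing; lra.
Qed.

Lemma H_ge1 n : (1 <= n)%nat -> 1 <= H n.
Proof.
  induction n as [|n IH]; intro Hn; [lia|].
  cbn [H]. destruct n.
  - simpl. lra.
  - assert (0 < / INR (S (S n))) by (apply Rinv_0_lt_compat, lt_0_INR; lia).
    specialize (IH ltac:(lia)). lra.
Qed.

Lemma E_big n k a : (4 <= n)%nat -> (1 <= k)%nat -> 0 < a < 1 ->
  a * exp (- a * (H n - / INR (S k))) <= / (exp 1 * (ln (INR n) - ln 2)).
Proof.
  intros Hn Hk Ha.
  assert (N4 : 4 <= INR n) by (replace 4 with (INR 4) by (simpl; ring); apply le_INR; lia).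
  assert (X0 : 0 < ln (INR n) - ln 2).
  { assert (ln 2 < ln (INR n)) by (apply ln_increasing; lra). lra. }
  assert (Hy : ln (INR n) - ln 2 <= H n - / INR (S k)).
  { pose proof (H_ln n). pose proof ln2_half.
    assert (ln (INR n) < ln (INR n + 1)) by (apply ln_increasing; lra).
    assert (/ INR (S k) <= / 2).
    { apply Rinv_le_contravar; [lra|]. replace 2 with (INR 2) by (simpl; ring). apply le_INR; lia. }
    lra. }
  eapply Rle_trans. apply E_gen. lra.
  apply Rinv_le_contravar.
  - apply Rmult_lt_0_compat; [apply exp_pos|lra].
  - apply Rmult_le_compat_l; [left; apply exp_pos|lra].
Qed.

Lemma E_small n a : (1 <= n)%nat -> 0 < a < 1 ->
  a * exp (- a * (H n - / INR (S 0))) <= 1.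
Proof.
  intros Hn Ha. pose proof (H_ge1 n Hn).
  replace (/ INR (S 0)) with 1 by (simpl; field).
  assert (exp (- a * (H n - 1)) <= 1).
  { destruct (Req_dec (- a * (H n - 1)) 0) as [E|E]; [rewrite E, exp_0; lra|].
    rewrite <- exp_0 at 2. left. apply exp_increasing. nra. }
  assert (0 < exp (- a * (H n - 1))) by apply exp_pos. nra.
Qed.

Lemma C_nonneg m i : 0 <= C m i.
Proof.
  unfold C. left. apply Rdiv_lt_0_compat; [apply INR_fact_lt_0|].
  apply Rmult_lt_0_compat; apply INR_fact_lt_0.
Qed.

Lemma C_S m j : C (S m) (S j) = C m j * INR (S m) / INR (S j).
Proof.
  unfold C. cbn [Nat.sub]. rewrite !fact_simpl, !mult_INR.
  pose proof (INR_fact_lt_0 m). pose proof (INR_fact_lt_0 j). pose proof (INR_fact_lt_0 (m - j)).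
  assert (0 < INR (S m)) by (apply lt_0_INR; lia).
  assert (0 < INR (S j)) by (apply lt_0_INR; lia).
  field. repeat split; lra.
Qed.

Lemma C_1 m : C (S m) 1 = INR (S m).
Proof.
  unfold C. cbn [Nat.sub]. rewrite Nat.sub_0_r, fact_simpl, mult_INR. simpl fact.
  pose proof (INR_fact_lt_0 m). change (INR 1) with 1. field. lra.
Qed.

Lemma sum_pow2 m : sum_f_R0 (fun i => C m i) m = 2 ^ m.
Proof.
  replace 2 with (1 + 1) by ring. rewrite binomial.
  apply sum_eq. intros. rewrite !pow1. ring.
Qed.

Lemma shift_le f m : (forall i, 0 <= f i) ->
  sum_f_R0 (fun k => f (S k)) m <= sum_f_R0 f (S m).
Proof.
  intro Hf. induction m as [|m IH].
  - simpl. specialize (Hf 0%nat). lra.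
  - rewrite tech5. rewrite (tech5 f (S m)). lra.
Qed.

Lemma binom_sum n' :
  let n := S n' in
  sum_f_R0 (fun k => C n (S k) / INR (S k)) n'
  <= 2 ^ (n + 1) / (INR n + 1) + 6 * 2 ^ (n + 1) / ((INR n + 1) * (INR n + 2)).
Proof.
  intro n.
  assert (Hn1 : 0 < INR n + 1) by (pose proof (pos_INR n); lra).
  assert (Hn2 : 0 < INR n + 2) by (pose proof (pos_INR n); lra).
  apply Rle_trans with (sum_f_R0 (fun k => C (S n) (S (S k)) / (INR n + 1)
        + 3 * C (S (S n)) (S (S (S k))) / ((INR n + 1) * (INR n + 2))) n').
  - apply sum_Rle. intros k _.
    rewrite (C_S (S n)), (C_S n).
    pose proof (C_nonneg n (S k)) as Cp.
    rewrite !S_INR. pose proof (pos_INR k).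
    set (c := C n (S k)) in *. set (x := INR k) in *.
        replace (c * (INR n + 1) / (x + 1 + 1) * (INR n + 1 + 1) / (x + 1 + 1 + 1))
      with (c * ((INR n + 1) * (INR n + 2)) / ((x + 2) * (x + 3))) by (field; repeat split; lra).
    replace (c * (INR n + 1) / (x + 1 + 1) / (INR n + 1)) with (c / (x + 2)) by (field; repeat split; lra).
    replace (3 * (c * ((INR n + 1) * (INR n + 2)) / ((x + 2) * (x + 3))) / ((INR n + 1) * (INR n + 2)))
      with (3 * c / ((x + 2) * (x + 3))) by (field; repeat split; lra).
    replace (c / (x + 2) + 3 * c / ((x + 2) * (x + 3))) with (c * ((x + 6) / ((x + 2) * (x + 3))))
      by (field; repeat split; lra).
    unfold Rdiv. apply Rmult_le_compat_l; [lra|].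
    apply Rmult_le_reg_r with ((x + 1) * (x + 2) * (x + 3)).
    { apply Rmult_lt_0_compat; [apply Rmult_lt_0_compat|]; lra. }
    replace (/ (x + 1) * ((x + 1) * (x + 2) * (x + 3))) with ((x + 2) * (x + 3)) by (field; repeat split; lra).
    replace ((x + 6) * / ((x + 2) * (x + 3)) * ((x + 1) * (x + 2) * (x + 3))) with ((x + 6) * (x + 1))
      by (field; repeat split; lra).
    nra.
  - rewrite sum_plus.
    assert (S1 : sum_f_R0 (fun k => C (S n) (S (S k))) n' <= 2 ^ (n + 1)).
    { rewrite <- sum_pow2. replace (n + 1)%nat with (S (S n')) by lia.
      eapply Rle_trans. apply (shift_le (fun k => C (S n) (S k))). intros; apply C_nonneg.
      replace (S n) with (S (S n')) by reflexivity.
      apply (shift_le (fun k => C (S (S n')) k)). intros; apply C_nonneg. }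
    assert (S2 : sum_f_R0 (fun k => C (S (S n)) (S (S (S k)))) n' <= 2 * 2 ^ (n + 1)).
    { replace (2 * 2 ^ (n + 1)) with (2 ^ (S (S n))) by (replace (n+1)%nat with (S n) by lia; reflexivity).
      rewrite <- sum_pow2.
      eapply Rle_trans. apply (shift_le (fun k => C (S (S n)) (S (S k)))). intros; apply C_nonneg.
      eapply Rle_trans. apply (shift_le (fun k => C (S (S n)) (S k))). intros; apply C_nonneg.
      apply (shift_le (fun k => C (S (S n)) k)). intros; apply C_nonneg. }
    rewrite (sum_eq _ (fun k => C (S n) (S (S k)) * / (INR n + 1))) by (intros; reflexivity).
    rewrite (sum_eq (fun k => 3 * C (S (S n)) (S (S (S k))) / ((INR n + 1) * (INR n + 2)))
         (fun k => C (S (S n)) (S (S (S k))) * (3 / ((INR n + 1) * (INR n + 2)))))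
      by (intros; unfold Rdiv; ring).
    rewrite <- !scal_sum.
    assert (0 < / (INR n + 1)) by (apply Rinv_0_lt_compat; lra).
    assert (0 < 3 / ((INR n + 1) * (INR n + 2))) by (apply Rdiv_lt_0_compat; nra).
    apply Rplus_le_compat.
    + unfold Rdiv. rewrite (Rmult_comm (2 ^ (n + 1))). apply Rmult_le_compat_l; lra.
    + apply Rle_trans with (3 / ((INR n + 1) * (INR n + 2)) * (2 * 2 ^ (n + 1))).
      * apply Rmult_le_compat_l; lra.
      * right. field. lra.
Qed.

Lemma poly_exp n : (4 <= n)%nat ->
  INR n * (INR n - 3) * (INR n - 2) * (INR n + 1) <= 12 * 2 ^ n.
Proof.
  intro Hn.
  assert (Hb : forall m, INR (m + 7) * (INR (m + 7) - 3) * (INR (m + 7) - 2) * (INR (m + 7) + 1)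
                 <= 12 * 2 ^ (m + 7)).
  { induction m as [|m IH].
    - simpl. lra.
    - replace (S m + 7)%nat with (S (m + 7)) by lia.
      rewrite S_INR. simpl pow.
      set (x := INR (m + 7)) in *.
      assert (7 <= x) by (unfold x; rewrite plus_INR; simpl; pose proof (pos_INR m); lra).
      assert ((x + 1) * (x + 1 - 3) * (x + 1 - 2) * (x + 1 + 1) <=
              2 * (x * (x - 3) * (x - 2) * (x + 1))).
      { assert (0 <= (x + 1) * (x - 2) * (x * x - 7 * x + 2)).
        { apply Rmult_le_pos; [nra| nra]. }
        nra. }
      lra. }
  destruct (Nat.le_gt_cases 7 n).
  - replace n with ((n - 7) + 7)%nat by lia. apply Hb.
  - assert (n = 4 \/ n = 5 \/ n = 6)%nat as [E|[E|E]] by lia; subst n; simpl; lra.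
Qed.

Lemma final_arith N P X e : 4 <= N -> 0 < X -> X <= (N - 2) / 2 -> 0 < e <= 3 -> 0 < P ->
  N * (N - 3) * (N - 2) * (N + 1) <= 6 * P ->
  1 + N + / (e * X) * (P / (N + 1) + 6 * P / ((N + 1) * (N + 2)))
  <= P / (e * N * X) * (1 + 15 / (N - 3)).
Proof.
  intros HN HX HX2 He HP Hpoly.
  assert (D : 0 < N * (N - 3)) by nra.
  assert (A : P / (N + 1) + 6 * P / ((N + 1) * (N + 2)) + 9 * P / (N * (N - 3))
              <= P / N * (1 + 15 / (N - 3))).
  { assert (A1 : P / (N + 1) <= P / N).
    { apply Rmult_le_compat_l; [lra|]. apply Rinv_le_contravar; lra. }
    assert (A2 : 6 * P / ((N + 1) * (N + 2)) <= 6 * P / (N * (N - 3))).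
    { apply Rmult_le_compat_l; [lra|]. apply Rinv_le_contravar; nra. }
    assert (E : P / N * (1 + 15 / (N - 3)) = P / N + 6 * P / (N * (N - 3)) + 9 * P / (N * (N - 3)))
      by (field; lra).
    rewrite E. lra. }
  assert (B : (1 + N) * (e * X) <= 9 * P / (N * (N - 3))).
  { apply Rle_trans with ((1 + N) * (3 * ((N - 2) / 2))).
    - apply Rmult_le_compat_l; [lra|]. apply Rmult_le_compat; lra.
    - apply Rmult_le_reg_r with (N * (N - 3)); [lra|].
      replace (9 * P / (N * (N - 3)) * (N * (N - 3))) with (9 * P) by (field; lra).
      nra. }
  assert (eX : 0 < e * X) by nra.
  replace (P / (e * N * X) * (1 + 15 / (N - 3))) with (/ (e * X) * (P / N * (1 + 15 / (N - 3))))
    by (field; repeat split; lra).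
  assert (1 + N <= / (e * X) * (9 * P / (N * (N - 3)))).
  { apply Rmult_le_reg_r with (e * X); [lra|].
    replace (/ (e * X) * (9 * P / (N * (N - 3))) * (e * X)) with (9 * P / (N * (N - 3)))
      by (field; lra). lra. }
  assert (0 < / (e * X)) by (apply Rinv_0_lt_compat; lra).
  apply Rle_trans with (/ (e * X) * (9 * P / (N * (N - 3))) +
                        / (e * X) * (P / (N + 1) + 6 * P / ((N + 1) * (N + 2)))); [lra|].
  rewrite <- Rmult_plus_distr_l. apply Rmult_le_compat_l; lra.
Qed.

Lemma gen_sum n a b : (4 <= n)%nat -> 0 < a < 1 -> 0 < b < 1 ->
  sum_f_R0 (fun k => Rabs (/ INR (fact (n - S k)) * falling (INR n - a - b) (n - S k)) *
                      Rabs (/ INR (fact (S k)) * falling a (S k))) (pred n)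
  <= INR n + / (exp 1 * (ln (INR n) - ln 2)) *
     (2 ^ (n + 1) / (INR n + 1) + 6 * 2 ^ (n + 1) / ((INR n + 1) * (INR n + 2))).
Proof.
  intros Hn Ha Hb.
  set (K := / (exp 1 * (ln (INR n) - ln 2))).
  assert (N4 : 4 <= INR n) by (replace 4 with (INR 4) by (simpl; ring); apply le_INR; lia).
  assert (Kp : 0 < K).
  { unfold K. apply Rinv_0_lt_compat, Rmult_lt_0_compat; [apply exp_pos|].
    assert (ln 2 < ln (INR n)) by (apply ln_increasing; lra). lra. }
  destruct n as [|n']; [lia|].
  pose proof (binom_sum n') as BS. cbv zeta in BS.
  cbn [pred].
  set (T := fun k => Rabs (/ INR (fact (S n' - S k)) * falling (INR (S n') - a - b) (S n' - S k)) *
                      Rabs (/ INR (fact (S k)) * falling a (S k))).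
  set (c := fun k => C (S n') (S k) / INR (S k)).
  assert (cp : forall k, 0 <= c k).
  { intro k. unfold c. apply Rmult_le_pos; [apply C_nonneg|left; apply Rinv_0_lt_compat, lt_0_INR; lia]. }
  rewrite decomp_sum by lia.
  assert (T0 : T 0%nat <= INR (S n')).
  { unfold T. eapply Rle_trans. apply term_bound; auto; lia.
    rewrite C_1. replace (INR (S n') / INR (S 0)) with (INR (S n')) by (simpl; field).
    pose proof (E_small (S n') a ltac:(lia) Ha). pose proof (pos_INR (S n')).
    rewrite <- (Rmult_1_r (INR (S n'))) at 2. apply Rmult_le_compat_l; lra. }
  assert (TS : sum_f_R0 (fun i => T (S i)) (pred n') <= K * sum_f_R0 c n').
  { apply Rle_trans with (sum_f_R0 (fun i => K * c (S i)) (pred n')).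
    - apply sum_Rle. intros i Hi. unfold T, c.
      eapply Rle_trans. apply term_bound; auto; lia.
      rewrite Rmult_comm. apply Rmult_le_compat_r.
      + apply Rmult_le_pos; [apply C_nonneg|left; apply Rinv_0_lt_compat, lt_0_INR; lia].
      + apply E_big; lia || lra.
    - rewrite (sum_eq _ (fun i => c (S i) * K)) by (intros; ring). rewrite <- scal_sum. apply Rmult_le_compat_l; [lra|].
      replace n' with (S (pred n')) at 2 by lia.
      apply (shift_le c). exact cp. }
  assert (K * sum_f_R0 c n' <= K * (2 ^ (S n' + 1) / (INR (S n') + 1) +
            6 * 2 ^ (S n' + 1) / ((INR (S n') + 1) * (INR (S n') + 2)))).
  { apply Rmult_le_compat_l; [lra|]. exact BS. }
  lra.
Qed.

Theorem lemma27 (n : nat) (a2 a3 : R) :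
  (4 <= n)%nat -> 0 < a2 < 1 -> 0 < a3 < 1 ->
  let a1 := 1 - a2 - a3 in
  let N := INR n in
  let L1 := (N - 1 + a1) / N in
  let L2 := a2 / N in
  let L3 := a3 / N in
  let C := 2 ^ (n + 1) / (exp 1 * N * (ln N - ln 2)) * (1 + 15 / (N - 3)) in
  sum_f_R0 (fun i2 => Rabs (lagr n (n - i2) i2 0 L1 L2 L3)) n
    <= C * (1 + exp 1 * (ln N - 1) * (N * (N + 1)) / 2 ^ (n + 1))
  /\
  sum_f_R0 (fun k => Rabs (lagr n (n - (k + 1)) 0 (k + 1) L1 L2 L3)) (n - 1)
    <= C * (1 + exp 1 * (ln N - 1) * (N ^ 2) / 2 ^ (n + 1)).
Proof.
  intros Hn Ha2 Ha3 a1 N L1 L2 L3 C.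
  assert (N4 : 4 <= N) by (unfold N; replace 4 with (INR 4) by (simpl; ring); apply le_INR; lia).
  assert (NL1 : INR n * L1 = INR n - a2 - a3) by (unfold L1, a1; fold N; field; lra).
  assert (NL2 : INR n * L2 = a2) by (unfold L2; fold N; field; lra).
  assert (NL3 : INR n * L3 = a3) by (unfold L3; fold N; field; lra).
  set (P := 2 ^ (n + 1)).
  assert (HP : 0 < P) by (apply pow_lt; lra).
  set (X := ln N - ln 2).
  assert (HX : 0 < X) by (assert (ln 2 < ln N) by (apply ln_increasing; lra); unfold X; lra).
  assert (HX2 : X <= (N - 2) / 2).
  { assert (X = ln (N / 2)).
    { unfold X, Rdiv. rewrite ln_mult, ln_Rinv; lra. }
    rewrite H0. pose proof (ln_le_xm1 (N / 2)). lra. }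
  assert (He : 0 < exp 1 <= 3) by (split; [apply exp_pos|apply exp_le_3]).
  assert (Hpoly : N * (N - 3) * (N - 2) * (N + 1) <= 6 * P).
  { pose proof (poly_exp n Hn). unfold P. rewrite pow_add. simpl pow. fold N in H0. lra. }
  pose proof (final_arith N P X (exp 1) N4 HX HX2 He HP Hpoly) as FA.
  assert (lnN1 : 1 <= ln N).
  { rewrite <- (ln_exp 1). left. apply ln_increasing; [apply exp_pos|lra]. }
  assert (Cp : 0 <= C).
  { unfold C. fold X P. apply Rmult_le_pos.
    - left. apply Rdiv_lt_0_compat; [apply pow_lt; lra|].
      apply Rmult_lt_0_compat; [apply Rmult_lt_0_compat|]; lra.
    - assert (0 < 15 / (N - 3)) by (apply Rdiv_lt_0_compat; lra). lra. }
  assert (Cform : C = P / (exp 1 * N * X) * (1 + 15 / (N - 3))) by reflexivity.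
  assert (ext : forall t, 0 <= t -> C <= C * (1 + exp 1 * (ln N - 1) * t / P)).
  { intros t Ht. assert (0 <= exp 1 * (ln N - 1) * t / P).
    { apply Rmult_le_pos; [apply Rmult_le_pos; [apply Rmult_le_pos|]; lra|].
      left. apply Rinv_0_lt_compat; lra. }
    nra. }
  assert (GEN : forall a b, 0 < a < 1 -> 0 < b < 1 ->
    sum_f_R0 (fun k => Rabs (/ INR (fact (n - S k)) * falling (INR n - a - b) (n - S k)) *
                      Rabs (/ INR (fact (S k)) * falling a (S k))) (pred n)
    <= N + / (exp 1 * X) * (P / (N + 1) + 6 * P / ((N + 1) * (N + 2)))).
  { intros a b Ha Hb. apply gen_sum; auto. }
  split.
  - rewrite decomp_sum by lia.
    assert (T0 : Rabs (lagr n (n - 0) 0 0 L1 L2 L3) <= 1).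
    { unfold lagr, lag_factor. rewrite Nat.sub_0_r, NL1. simpl fact. simpl falling.
      change (INR 1) with 1. rewrite Rinv_1, !Rmult_1_l, !Rmult_1_r.
      rewrite Rabs_mult, Rabs_inv. rewrite (Rabs_right (INR (fact n))) by (apply Rle_ge, pos_INR).
      pose proof (INR_fact_lt_0 n).
      assert (Rabs (falling (INR n - a2 - a3) n) <= INR (fact n)).
      { rewrite (fall_fact n n) by lia. rewrite Nat.sub_diag. simpl fact. change (INR 1) with 1.
        rewrite Rmult_1_r. apply fall_abs_le. intros t Ht.
        assert (INR t + 1 <= INR n).
        { rewrite <- S_INR. apply le_INR. lia. }
        apply Rabs_le. lra. }
      apply Rmult_le_reg_l with (INR (fact n)); [lra|].
      rewrite <- Rmult_assoc, Rinv_r by lra. lra. }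
    assert (R : sum_f_R0 (fun i => Rabs (lagr n (n - S i) (S i) 0 L1 L2 L3)) (pred n)
       = sum_f_R0 (fun k => Rabs (/ INR (fact (n - S k)) * falling (INR n - a2 - a3) (n - S k)) *
                      Rabs (/ INR (fact (S k)) * falling a2 (S k))) (pred n)).
    { apply sum_eq. intros i _. unfold lagr, lag_factor. rewrite NL1, NL2.
      simpl fact. simpl falling. change (INR 1) with 1. rewrite Rinv_1, !Rmult_1_r.
      apply Rabs_mult. }
    rewrite R. pose proof (GEN a2 a3 Ha2 Ha3). pose proof (ext (N * (N + 1))).
    assert (0 <= N * (N + 1)) by nra.
    cbv beta. rewrite Cform in *. lra.
  - assert (R : sum_f_R0 (fun k => Rabs (lagr n (n - (k + 1)) 0 (k + 1) L1 L2 L3)) (n - 1)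
       = sum_f_R0 (fun k => Rabs (/ INR (fact (n - S k)) * falling (INR n - a3 - a2) (n - S k)) *
                      Rabs (/ INR (fact (S k)) * falling a3 (S k))) (pred n)).
    { rewrite Nat.sub_1_r. apply sum_eq. intros i _. unfold lagr, lag_factor.
      rewrite Nat.add_1_r. rewrite NL1, NL3.
      replace (INR n - a2 - a3) with (INR n - a3 - a2) by ring.
      simpl fact. simpl falling. change (INR 1) with 1. rewrite Rinv_1, !Rmult_1_r.
      apply Rabs_mult. }
    rewrite R. pose proof (GEN a3 a2 Ha3 Ha2). pose proof (ext (N ^ 2)).
    assert (0 <= N ^ 2) by (apply pow_le; lra).
    cbv beta. rewrite Cform in *. lra.
Qed.
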